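(* Let $X$ be a mixed-stable sequence with respect to a full BST $T$, and assume $X$ is a whole multiple of its atomic sequence. Then for every leaf $x$ of $T$, $$3^{-d(x)}\le f(x)\le 3^{-d(x)/2}.$$ If $X$ is strongly-stable, then $f(x)=2^{-d(x)}$.
   Context: $d(x)$ is the depth of $x$ in $T$, i.e. the number of edges from the root to $x$. Stable sequences. Let $T$ be a full binary search tree (every inner node has exactly two children), and let $X$ be a query sequence consisting only of keys stored at leaves of $T$. For an inner node $v$, let $X_v$ be the subsequence of $X$ consisting of the queries to keys in the subtree of $v$. - The node $v$ is strongly-stable if consecutive queries of $X_v$ alternate between the left and right subtrees of $v$. - The node $v$ is weakly-stable with a left bias if its left child $u$ is an inner node and $X_v$ repeats cyclically (from some starting phase) the pattern: a query in the left subtree of $u$, then one in the right subtree of $u$, then one in the right subtree of $v$. - Weakly-stable with a right bias is the mirror image: $u$ is the right child of $v$, and the pattern is right subtree of $u$, left subtree of $u$, left subtree of $v$. In both weakly-stable cases $u$ is called the favored child of $v$. $X$ (and $T$) is mixed-stable if every inner node of $T$ is strongly-stable or weakly-stable, and strongly-stable if every inner node is strongly-stable. Given $T$, the stability type of each inner node, and the subtree each node's pattern starts with, the stable sequence is determined up to its length. Its atomic sequence is the shortest such sequence all of whose repetitions are again such stable sequences. $X$ is a whole multiple of its atomic sequence if it is a concatenation of copies of it. For such $X$, the frequency $f(x)$ of a key $x$ is the fraction of the queries of $X$ that are equal to $x$. *)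

(* Defs.v *)
From HB Require Import structures.
From mathcomp Require Import all_boot all_order all_algebra.
From mathcomp Require Import reals exp.
Set Implicit Arguments. Unset Strict Implicit. Unset Printing Implicit Defensive.
Import Order.TTheory GRing.Theory Num.Theory.

Inductive tree := Leaf | Node of tree & tree.

(* Nodes are addressed by paths from the root: false = left, true = right.
   A leaf key is identified with its path; the depth d(x) is the length of
   the path. The subtree of the node at path p consists of the nodes whose
   path has p as a prefix. *)
Fixpoint subtree (t : tree) (p : seq bool) : option tree :=
  match p with
  | [::] => Some t
  | b :: p' => match t with
               | Leaf => None
               | Node l r => subtree (if b then r else l) p'
               end
  end.

Definition is_leaf (t : tree) (p : seq bool) : bool :=
  if subtree t p is Some Leaf then true else false.
Definition is_inner (t : tree) (p : seq bool) : bool :=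
  if subtree t p is Some (Node _ _) then true else false.

Definition depth (x : seq bool) : nat := size x.

Definition subseq_at (p : seq bool) (X : seq (seq bool)) := filter (prefix p) X.

Definition dir (p x : seq bool) : bool := nth false x (size p).

(* Stability type of an inner node, together with the subtree its pattern
   starts with.
   Strong b : alternation, first query in the right subtree iff b.
   WeakL k  : left bias; classes 0 = left subtree of u (u = left child),
              1 = right subtree of u, 2 = right subtree of v; the pattern
              0,1,2,0,1,2,... is followed cyclically starting at class k.
   WeakR k  : mirror image (u = right child; 0 = right subtree of u,
              1 = left subtree of u, 2 = left subtree of v). *)
Inductive stype := Strong of bool | WeakL of 'I_3 | WeakR of 'I_3.

Definition clsL (p x : seq bool) : nat :=
  if prefix (rcons p true) x then 2
  else if prefix (p ++ [:: false; false]) x then 0 else 1.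
Definition clsR (p x : seq bool) : nat :=
  if prefix (rcons p false) x then 2
  else if prefix (p ++ [:: true; true]) x then 0 else 1.

Definition node_ok (t : tree) (s : stype) (p : seq bool) (X : seq (seq bool)) : Prop :=
  let Xv := subseq_at p X in
  match s with
  | Strong b =>
      (forall i, i.+1 < size Xv ->
         dir p (nth [::] Xv i) != dir p (nth [::] Xv i.+1)) /\
      (0 < size Xv -> dir p (nth [::] Xv 0) = b)
  | WeakL k =>
      is_inner t (rcons p false) /\
      (forall i, i < size Xv -> clsL p (nth [::] Xv i) = (k + i) %% 3)
  | WeakR k =>
      is_inner t (rcons p true) /\
      (forall i, i < size Xv -> clsR p (nth [::] Xv i) = (k + i) %% 3)
  end.

Definition stable_with (t : tree) (c : seq bool -> stype) (X : seq (seq bool)) : Prop :=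
  all (is_leaf t) X /\ forall p, is_inner t p -> node_ok t (c p) p X.

Definition repeat_stable (t : tree) (c : seq bool -> stype) (A : seq (seq bool)) : Prop :=
  forall m, 0 < m -> stable_with t c (flatten (nseq m A)).

Definition atomic (t : tree) (c : seq bool -> stype) (A : seq (seq bool)) : Prop :=
  0 < size A /\ repeat_stable t c A /\
  forall B, 0 < size B -> size B < size A -> ~ repeat_stable t c B.

Definition whole_multiple_of_atomic (t : tree) (c : seq bool -> stype)
    (X : seq (seq bool)) : Prop :=
  exists A k, atomic t c A /\ 0 < k /\ X = flatten (nseq k A).

Definition freq (R : realType) (X : seq (seq bool)) (x : seq bool) : R :=
  ((count_mem x X)%:R / (size X)%:R)%R.

(* Main.v *)
Require Import Defs.
From HB Require Import structures.
From mathcomp Require Import all_boot all_order all_algebra.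
From mathcomp Require Import reals exp.
From mathcomp Require Import zify.
Import Order.TTheory GRing.Theory Num.Theory.
Set Implicit Arguments. Unset Strict Implicit.

Lemma prefix_rconsE (q x : seq bool) b :
  prefix (rcons q b) x = [&& prefix q x, size q < size x & nth false x (size q) == b].
Proof.
elim: q x => [|a q IH] [|y x] //=.
  by rewrite prefix0s andbT.
by rewrite IH; case: (a == y).
Qed.

Lemma subtree_cat t p z :
  subtree t (p ++ z) = if subtree t p is Some t' then subtree t' z else None.
Proof.
elim: p t => [|b p IH] [|l r] //=; by case: z.
Qed.

Lemma subtree_leaf_ext z : subtree Leaf z <> None -> z = [::].
Proof. by case: z. Qed.

Lemma leaf_prefix_eq t x y : is_leaf t x -> is_leaf t y -> prefix x y -> y = x.
Proof.
move=> Hx Hy /prefixP[z E]; subst y.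
move: Hy; rewrite /is_leaf subtree_cat.
move: Hx; rewrite /is_leaf; case: (subtree t x) => // [[|l r]] //= _.
by case: z => // _; rewrite cats0.
Qed.

Lemma count_nth_iota (T : Type) (x0 : T) (s : seq T) (a : pred T) (f : pred nat) :
  (forall i, i < size s -> a (nth x0 s i) = f i) -> count a s = count f (iota 0 (size s)).
Proof.
move=> H; rewrite -{1}(mkseq_nth x0 s) /mkseq count_map.
apply: eq_in_count => i; rewrite mem_iota add0n => /H //.
Qed.

Lemma count_mod m j k q : 0 < m ->
  (forall k, count (fun i => (k + i) %% m == j) (iota 0 m) = 1) ->
  count (fun i => (k + i) %% m == j) (iota 0 (q * m)) = q.
Proof.
move=> m0 H; elim: q => [|q IH]; first by rewrite mul0n.
rewrite mulSn addnC iotaD count_cat IH.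
have -> : iota (0 + q * m) m = map (addn (q * m)) (iota 0 m) by rewrite -iotaDl addn0.
rewrite count_map.
rewrite -[RHS]addn1; congr (_ + _); rewrite -(H k).
apply: eq_count => i /=; by rewrite addnCA modnMDl.
Qed.

Lemma count_mod2 j k q : j < 2 ->
  count (fun i => (k + i) %% 2 == j) (iota 0 (q * 2)) = q.
Proof.
move=> Hj; apply: count_mod => // k'.
rewrite /= !addn0 -(modnDml k' 1).
have : k' %% 2 < 2 by rewrite ltn_mod.
case: (k' %% 2) => [|[|]] //; case: j Hj => [|[|]] //.
Qed.

Lemma count_mod3 j k q : j < 3 ->
  count (fun i => (k + i) %% 3 == j) (iota 0 (q * 3)) = q.
Proof.
move=> Hj; apply: count_mod => // k'.
rewrite /= !addn0 -(modnDml k' 1) -(modnDml k' 2).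
have : k' %% 3 < 3 by rewrite ltn_mod.
case: (k' %% 3) => [|[|[|]]] //; case: j Hj => [|[|[|]]] //.
Qed.

Definition nn (A : seq (seq bool)) q := count (prefix q) A.

Lemma inner_leaf_size t q x : is_inner t q -> is_leaf t x -> prefix q x -> size q < size x.
Proof.
move=> Hq Hx /prefixP[z E]; subst x; rewrite size_cat.
case: z Hx => [|b z] Hx; last by rewrite /= addnS ltnS leq_addr.
by move: Hq Hx; rewrite cats0 /is_inner /is_leaf; case: (subtree t q) => // [[]].
Qed.

Lemma Fsum t A q : all (is_leaf t) A -> is_inner t q ->
  nn A (rcons q false) + nn A (rcons q true) = nn A q.
Proof.
move=> HA Hq; rewrite /nn -count_predUI.
have -> : count (predI (prefix (rcons q false)) (prefix (rcons q true))) A = 0.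
  apply/eqP; rewrite -leqn0 leqNgt -has_count; apply/hasPn => x _ /=.
  by rewrite !prefix_rconsE; case: (nth false x (size q)); rewrite !andbF.
rewrite addn0; apply: eq_in_count => x xA /=.
have Hx : is_leaf t x by move/allP: HA => /(_ x xA).
rewrite !prefix_rconsE; case Hp: (prefix q x) => //=.
rewrite (inner_leaf_size Hq Hx Hp) /=; by case: (nth false x (size q)).
Qed.

Lemma count_sub_filter (A : seq (seq bool)) q r :
  (forall x, prefix r x -> prefix q x) ->
  count (prefix r) (filter (prefix q) A) = nn A r.
Proof.
move=> H; rewrite count_filter; apply: eq_count => x /=.
by case E: (prefix r x) => //=; rewrite H.
Qed.

Lemma strong_rel t c A q b : all (is_leaf t) A -> stable_with t c (A ++ A) ->
  is_inner t q -> c q = Strong b -> 2 * nn A (rcons q false) = nn A q.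
Proof.
move=> HA [_ Hst] Hq Hc; have := Hst q Hq.
rewrite /node_ok Hc /subseq_at filter_cat.
set s := filter (prefix q) A => -[Halt Hfirst].
have Hpat : forall i, i < size (s ++ s) -> dir q (nth [::] (s ++ s) i) = odd i (+) b.
  elim=> [|i IH] Hi; first by rewrite Hfirst.
  have := Halt i Hi; rewrite IH ?(ltnW Hi) //=.
  move: (dir q (nth [::] (s ++ s) i.+1)) => d.
  by case: d; case: (odd i); case: b Hc Hfirst IH.
have Hsize : ~~ odd (size s).
  case E: (size s) => [|n] //; rewrite -E.
  have Hs : 0 < size s by rewrite E.
  have H0 := Hpat 0; have H1 := Hpat (size s).
  rewrite size_cat nth_cat Hs in H0; rewrite size_cat nth_cat ltnn subnn in H1.
  have H0' := H0 ltac:(lia); have H1' := H1 ltac:(lia).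
  rewrite H0' in H1'.
  by move: H1'; case: (odd (size s)); case: b Hc Hfirst Hpat H0 H1 H0'.
have Es : size s = (size s)./2 * 2.
  by rewrite muln2 -{1}(odd_double_half (size s)) (negbTE Hsize).
have E1 : nn A (rcons q false) = count (prefix (rcons q false)) s.
  by rewrite count_sub_filter // => x; rewrite prefix_rconsE => /andP[].
have E2 : nn A q = size s by rewrite /nn -size_filter.
rewrite E1 E2.
rewrite (@count_nth_iota _ [::] _ _ (fun i => (b + i) %% 2 == 0)); last first.
  move=> i Hi; have Hm : nth [::] s i \in s by apply: mem_nth.
  have Hp : prefix q (nth [::] s i) by move: Hm; rewrite mem_filter => /andP[].
  have Hl : is_leaf t (nth [::] s i).
    by move: Hm; rewrite mem_filter => /andP[_ /(allP HA)].
  rewrite prefix_rconsE Hp (inner_leaf_size Hq Hl Hp) /=.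
  have := Hpat i ltac:(rewrite size_cat; lia).
  rewrite nth_cat Hi /dir => ->.
  rewrite modn2 oddD; by destruct (odd i), b.
rewrite {1}Es count_mod2 //; lia.
Qed.

Definition clsG (b0 : bool) (p x : seq bool) : nat :=
  if prefix (rcons p (~~ b0)) x then 2
  else if prefix (rcons (rcons p b0) b0) x then 0 else 1.

Lemma rcons2 (p : seq bool) a b : rcons (rcons p a) b = p ++ [:: a; b].
Proof. by rewrite -!cats1 -catA. Qed.

Lemma clsL_G p x : clsL p x = clsG false p x.
Proof. by rewrite /clsL /clsG rcons2. Qed.
Lemma clsR_G p x : clsR p x = clsG true p x.
Proof. by rewrite /clsR /clsG rcons2. Qed.

Lemma weak_rel A q b0 k (cl : seq bool -> nat) :
  (forall x, cl x = clsG b0 q x) ->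
  (forall i, i < size (subseq_at q (A ++ A)) ->
     cl (nth [::] (subseq_at q (A ++ A)) i) = (k + i) %% 3) ->
  3 * nn A (rcons q (~~ b0)) = nn A q /\ 3 * nn A (rcons (rcons q b0) b0) = nn A q.
Proof.
move=> Hcl; rewrite /subseq_at filter_cat; set s := filter (prefix q) A => Hpat.
have Hd : size s = (size s %/ 3) * 3.
  case E: (size s) => [|n] //; rewrite -E.
  have H0 := Hpat 0; have H1 := Hpat (size s).
  rewrite size_cat nth_cat E /= in H0; rewrite size_cat nth_cat ltnn subnn in H1.
  have H0' := H0 ltac:(lia); have H1' := H1 ltac:(lia).
  rewrite H0' in H1'.
  have Hm : size s %% 3 = 0 by lia.
  by rewrite {1}(divn_eq (size s) 3) Hm addn0.
have E2 : nn A q = size s by rewrite /nn -size_filter.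
have Hnth : forall i, i < size s -> nth [::] (s ++ s) i = nth [::] s i.
  by move=> i Hi; rewrite nth_cat Hi.
have Hp2 : forall i, i < size s -> cl (nth [::] s i) = (k + i) %% 3.
  by move=> i Hi; rewrite -Hnth // Hpat // size_cat; lia.
split.
- have E1 : nn A (rcons q (~~ b0)) = count (prefix (rcons q (~~ b0))) s.
    by rewrite count_sub_filter // => x; rewrite prefix_rconsE => /andP[].
  rewrite E1 E2 (@count_nth_iota _ [::] _ _ (fun i => (k + i) %% 3 == 2)).
    by rewrite {1}Hd count_mod3 //; lia.
  move=> i Hi; rewrite -Hp2 // Hcl /clsG.
  by case: (prefix (rcons q (~~ b0)) _); case: (prefix (rcons (rcons q b0) b0) _).
- have E1 : nn A (rcons (rcons q b0) b0) = count (prefix (rcons (rcons q b0) b0)) s.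
    rewrite count_sub_filter // => x; rewrite prefix_rconsE => /andP[+ _].
    by rewrite prefix_rconsE => /andP[].
  rewrite E1 E2 (@count_nth_iota _ [::] _ _ (fun i => (k + i) %% 3 == 0)).
    by rewrite {1}Hd count_mod3 //; lia.
  move=> i Hi; rewrite -Hp2 // Hcl /clsG.
  set x := nth [::] s i.
  case P1 : (prefix (rcons q (~~ b0)) x); last by case: (prefix (rcons (rcons q b0) b0) x).
  move: P1; rewrite !prefix_rconsE size_rcons => /and3P[_ _ /eqP Hn].
  apply/negbTE; apply/negP => /and3P[/and3P[_ _ /eqP Hn'] _ _].
  by move: Hn; rewrite Hn'; case: (b0).

Qed.

Definition wk (c : seq bool -> stype) q : option bool :=
  match c q with Strong _ => None | WeakL _ => Some false | WeakR _ => Some true end.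

Section Main.
Variables (t : tree) (c : seq bool -> stype) (A : seq (seq bool)).
Hypothesis HA : all (is_leaf t) A.
Hypothesis HAA : stable_with t c (A ++ A).
Hypothesis HApos : 0 < size A.

Lemma rel_strong q : is_inner t q -> wk c q = None -> forall b, 2 * nn A (rcons q b) = nn A q.
Proof.
move=> Hq; rewrite /wk; case Hc: (c q) => [b0|//|//] _.
have H := strong_rel HA HAA Hq Hc; have := Fsum HA Hq.
by move=> F [|]; lia.
Qed.

Lemma rel_weak q fb : is_inner t q -> wk c q = Some fb ->
  [/\ is_inner t (rcons q fb), 3 * nn A (rcons q (~~ fb)) = nn A q,
      3 * nn A (rcons q fb) = 2 * nn A q &
      forall b, 3 * nn A (rcons (rcons q fb) b) = nn A q].
Proof.
move=> Hq; have [_ Hst] := HAA; have := Hst q Hq; rewrite /wk /node_ok.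
case Hc: (c q) => [b0|k|k] //= [Hi Hp] [<-].
- have [H1 H2] := weak_rel (b0 := false) (cl := clsL q) (clsL_G q) Hp.
  have F1 := Fsum HA Hq; have F2 := Fsum HA Hi.
  simpl in H1, H2 |- *; split => //; last case;
  move: H1 H2 F1 F2; move: (nn A q) (nn A (rcons q true)) (nn A (rcons q false));
  move: (nn A (rcons (rcons q false) false)) (nn A (rcons (rcons q false) true)); lia.
- have [H1 H2] := weak_rel (b0 := true) (cl := clsR q) (clsR_G q) Hp.
  have F1 := Fsum HA Hq; have F2 := Fsum HA Hi.
  simpl in H1, H2 |- *; split => //; last case;
  move: H1 H2 F1 F2; move: (nn A q) (nn A (rcons q true)) (nn A (rcons q false));
  move: (nn A (rcons (rcons q true) false)) (nn A (rcons (rcons q true) true)); lia.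
Qed.

Definition node p : bool := if subtree t p is Some _ then true else false.

Lemma node_parent q b : node (rcons q b) -> is_inner t q.
Proof.
rewrite /node -cats1 subtree_cat /is_inner.
by case: (subtree t q) => // [[|l r]].
Qed.

Lemma inner_node q : is_inner t q -> node q.
Proof. by rewrite /node /is_inner; case: (subtree t q). Qed.

Lemma LB p : node p -> nn A [::] <= nn A p * 3 ^ size p.
Proof.
elim/last_ind: p => [|q b IH] Hn; first by rewrite muln1.
have Hq := node_parent Hn; have := IH (inner_node Hq).
rewrite size_rcons expnS.
case Hw: (wk c q) => [fb|].
- have [_ H1 H2 _] := rel_weak Hq Hw.
  case: b Hn; case: fb Hw H1 H2 => /= _ H1 H2 _ ; nia.
- have := rel_strong Hq Hw b; nia.
Qed.

Lemma nn_pos p : node p -> 0 < nn A p.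
Proof.
move=> /LB; rewrite /nn.
have -> : count (prefix [::]) A = size A by rewrite -[RHS]count_predT; apply: eq_count => x; rewrite prefix0s.
move: HApos; case: (nn A p) => //; lia.
Qed.

Lemma fav_strong w fb : is_inner t w -> wk c w = Some fb -> wk c (rcons w fb) = None.
Proof.
move=> Hw Hk; have [Hi H1 H2 H3] := rel_weak Hw Hk.
have P := nn_pos (inner_node Hw).
case Hk2 : (wk c (rcons w fb)) => [fb'|] //.
have [_ G1 G2 _] := rel_weak Hi Hk2.
have := H3 (~~ fb'); lia.
Qed.

Definition NF p := forall q b, p = rcons q b -> wk c q != Some b.

Lemma UB p : node p ->
  3 * (nn A p * nn A p * 3 ^ size p) <= 4 * (nn A [::] * nn A [::]) /\
  (NF p -> nn A p * nn A p * 3 ^ size p <= nn A [::] * nn A [::]).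
Proof.
elim/last_ind: p => [|q b IH] Hn.
  rewrite expn0 muln1; split => //; move: (nn A [::] * nn A [::]) => z; lia.
have Hq := node_parent Hn; have [IH1 IH2] := IH (inner_node Hq).
rewrite size_rcons expnS.
move: IH1 IH2; set E := 3 ^ size q; set M := nn A [::] * nn A [::] => IH1 IH2.
case Hw: (wk c q) => [fb|].
- have [_ H1 H2 _] := rel_weak Hq Hw.
  case Eb: (b == fb).
  + move/eqP: Eb => Eb; subst b.
    have NFq : NF q.
      move=> w b' Ew; apply/negP => /eqP Hw'.
      have Hiw : is_inner t w by apply: (@node_parent w b'); rewrite -Ew; exact: inner_node.
      have := fav_strong Hiw Hw'; rewrite -Ew Hw //.
    have IH3 := IH2 NFq.
    have H4 := congr1 (fun z => z * z * E) H2; simpl in H4.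
    split; last by move=> H; have := H q fb erefl; rewrite Hw eqxx.
    move: H4 IH3; move: (nn A (rcons q fb)) (nn A q) => x y; lia.
  + have Eb' : b = ~~ fb by move: Eb; case: (b); case: (fb).
    subst b; move: H1 IH1; move: (nn A (rcons q (~~ fb))) (nn A q) => x y H1.
    rewrite -H1; lia.
- have := rel_strong Hq Hw b; move: IH1; move: (nn A (rcons q b)) (nn A q) => x y IH1 H.
  rewrite -H in IH1; lia.
Qed.

Lemma allstrong p : (forall q, is_inner t q -> wk c q = None) -> node p ->
  nn A p * 2 ^ size p = nn A [::].
Proof.
move=> Hs; elim/last_ind: p => [|q b IH] Hn; first by rewrite muln1.
have Hq := node_parent Hn; have := IH (inner_node Hq).
have := rel_strong Hq (Hs q Hq) b.
rewrite size_rcons expnS; move: (nn A (rcons q b)) (nn A q) => x y; nia.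
Qed.

End Main.
Local Open Scope ring_scope.

Lemma freq_rep (R : realType) A k x : (0 < k)%N -> (0 < size A)%N ->
  freq R (flatten (nseq k A)) x = (count_mem x A)%:R / (size A)%:R.
Proof.
move=> Hk HA.
have Ec : count_mem x (flatten (nseq k A)) = (k * count_mem x A)%N.
  elim: (k) => [|j IH] //=; by rewrite count_cat IH mulSn.
have Es : size (flatten (nseq k A)) = (k * size A)%N.
  elim: (k) => [|j IH] //=; by rewrite size_cat IH mulSn.
rewrite /freq Ec Es !natrM -mulf_div divff ?mul1r //.
by rewrite pnatr_eq0 -lt0n.
Qed.

Lemma count_leaf t A x : all (is_leaf t) A -> is_leaf t x -> count_mem x A = nn A x.
Proof.
move=> HA Hx; apply: eq_in_count => y yA /=.
have Hy : is_leaf t y by move/allP: HA => /(_ y yA).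
apply/eqP/idP => [->|H]; first exact: prefix_refl.
exact: leaf_prefix_eq Hx Hy H.
Qed.

Lemma size_nn (A : seq (seq bool)) : size A = nn A [::].
Proof. by rewrite /nn -[LHS]count_predT; apply: eq_count => x; rewrite prefix0s. Qed.

Unset Implicit Arguments.
Theorem lemma3 (R : realType) (t : tree) (c : seq bool -> stype)
    (X : seq (seq bool)) :
  stable_with t c X ->
  whole_multiple_of_atomic t c X ->
  (forall x, is_leaf t x ->
     (3 : R) ^- depth x <= freq R X x /\
     freq R X x <= (3 : R) `^ (- ((depth x)%:R / 2))) /\
  ((forall p, is_inner t p -> exists b, c p = Strong b) ->
   forall x, is_leaf t x -> freq R X x = (2 : R) ^- depth x).
Proof.
move=> _ [A [k [[HApos [Hrep _]] [Hk ->]]]].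
have HA1 := Hrep 1%N erefl; rewrite /= cats0 in HA1.
have HA2 := Hrep 2%N erefl; rewrite /= cats0 in HA2.
have HA := HA1.1.
have Hnode : forall x, is_leaf t x -> node t x.
  by move=> x; rewrite /node /is_leaf; case: (subtree t x).
have Hf : forall x, is_leaf t x -> freq R (flatten (nseq k A)) x = (nn A x)%:R / (nn A [::])%:R.
  by move=> x Hx; rewrite freq_rep // (count_leaf HA Hx) size_nn.
have M0 : (0 < nn A [::])%N by rewrite -size_nn.
split.
- move=> x Hx; rewrite Hf //; split.
  + have := LB HA HA2 HApos (Hnode x Hx).
    rewrite ler_pdivlMr ?ltr0n // mulrC ler_pdivrMr ?exprn_gt0 ?ltr0n //.
    by rewrite -natrX -natrM ler_nat.
  + have NFx : NF c x.
      move=> q b Eq; apply/negP => /eqP Hw.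
      have Hq : is_inner t q by apply: (@node_parent t q b); rewrite -Eq; exact: Hnode.
      have [Hi _ _ _] := rel_weak HA HA2 HApos Hq Hw.
      by subst x; move: Hi Hx; rewrite /is_inner /is_leaf; case: (subtree t (rcons q b)) => [[|l r]|].
    have H := (UB HA HA2 HApos (Hnode x Hx)).2 NFx.
    have Hy : ((3 : R) `^ (- ((depth x)%:R / 2))) ^+ 2 = (3 ^+ depth x)^-1.
      rewrite -powR_mulrn ?powR_ge0 // -powRrM mulNr divfK ?pnatr_eq0 //.
      by rewrite powR_invn.
    rewrite -(ler_pXn2r (n := 2%N)) //; last 2 first.
    * by rewrite qualifE /= divr_ge0.
    * by rewrite qualifE /= powR_ge0.
    rewrite Hy expr_div_n ler_pdivrMr ?exprn_gt0 ?ltr0n //.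
    rewrite mulrC ler_pdivlMr ?exprn_gt0 ?ltr0n //.
    by rewrite -!natrX -natrM ler_nat !expnS !expn0 !muln1.
- move=> Hs x Hx.
  have Hs' : forall q, is_inner t q -> wk c q = None.
    by move=> q /Hs [b Hb]; rewrite /wk Hb.
  have E := allstrong HA HA2 HApos Hs' (Hnode x Hx).
  rewrite Hf // -E natrM natrX invfM mulrA divff ?mul1r //.
  rewrite pnatr_eq0 -lt0n; exact: (nn_pos HA HA2 HApos (Hnode x Hx)).
Qed.
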